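(* Let $\mathbf f:\mathbb{R}/\mathbb{Z}\to\mathbb{R}^n$ satisfy $L_1\,d_{\mathbb{R}/\mathbb{Z}}(\theta,\theta')\le\|\mathbf f(\theta)-\mathbf f(\theta')\|\le L_2\,d_{\mathbb{R}/\mathbb{Z}}(\theta,\theta')$ for all $\theta,\theta'$, with constants $0<L_1\le L_2$. For each $m$ let $0\le\theta_1<\dots<\theta_m<1$ (indices cyclic, $\theta_{k+m}=\theta_k+1$) satisfy the equilateral condition $\|\Delta_k\mathbf f\|=L_m/m$ for $k=1,\dots,m$, where $L_m=\sum_{k=1}^m\|\Delta_k\mathbf f\|$. Then for all sufficiently large $m$ and all integers $i,j$ with $|i-j|\le[\frac m2]$, \[ A_i\|\Delta_i^j\mathbf f\|\ge\frac{L_mL_1}{L_2}\frac{|i-j|-\frac12}{m},\quad A_i\|\Delta_i^{j+1}\mathbf f\|\ge\frac{L_mL_1}{L_2}\frac{|i-j|-\frac12}{m}, \] \[ A_{ij}\|\Delta_i^j\mathbf f\|\ge\frac{L_mL_1}{L_2}\frac{|i-j|-\frac14}{m},\quad A_{ij}\|\Delta_i^{j+1}\mathbf f\|\ge\frac{L_mL_1}{2L_2}\frac{|i-j|}{m}. \]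
   Context: $\Delta_i^j\mathbf f=\mathbf f(\theta_j)-\mathbf f(\theta_i)$, $\Delta_i\mathbf f=\Delta_i^{i+1}\mathbf f$, $\mathbf f$ regarded as $1$-periodic on $\mathbb{R}$; $[x]$ is the integer part. For a doubly indexed sequence $u_{ij}$: $A_i(u)=\frac{u_{ij}+u_{(i+1)j}}2$ and $A_{ij}(u)=\frac{u_{ij}+u_{(i+1)j}+u_{i(j+1)}+u_{(i+1)(j+1)}}4$. Thus e.g. $A_i\|\Delta_i^{j+1}\mathbf f\|=\frac12(\|\Delta_i^{j+1}\mathbf f\|+\|\Delta_{i+1}^{j+1}\mathbf f\|)$ and $A_{ij}\|\Delta_i^{j}\mathbf f\|=\frac14(\|\Delta_i^j\mathbf f\|+\|\Delta_{i+1}^j\mathbf f\|+\|\Delta_i^{j+1}\mathbf f\|+\|\Delta_{i+1}^{j+1}\mathbf f\|)$. *)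

(* Defs.v *)
From HB Require Import structures.
From mathcomp Require Import all_boot all_order all_algebra.
From mathcomp Require Import reals.
Set Implicit Arguments. Unset Strict Implicit. Unset Printing Implicit Defensive.
Import Order.TTheory GRing.Theory Num.Theory.
Local Open Scope ring_scope.

Definition enorm (R : realType) (n : nat) (v : 'rV[R]_n) : R :=
  Num.sqrt (\sum_(k < n) v 0 k ^+ 2).

(* Distance on R/Z between the classes of x and y: distance of x - y
   to the nearest integer. *)
Definition dRZ (R : realType) (x y : R) : R :=
  let t := (x - y) - (Num.floor (x - y))%:~R in Num.min t (1 - t).

Definition Ai (R : realType) (u : int -> int -> R) (i j : int) : R :=
  (u i j + u (i + 1)%R j) / 2.
Definition Aij (R : realType) (u : int -> int -> R) (i j : int) : R :=
  (u i j + u (i + 1)%R j + u i (j + 1)%R + u (i + 1)%R (j + 1)%R) / 4.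

Definition normDelta (R : realType) (n : nat) (f : R -> 'rV[R]_n)
  (theta : int -> R) (i j : int) : R :=
  enorm (f (theta j) - f (theta i)).

Definition polyLength (R : realType) (n : nat) (f : R -> 'rV[R]_n)
  (theta : int -> R) (m : nat) : R :=
  \sum_(1 <= k < m.+1) normDelta f theta k%:Z (k%:Z + 1).

(* Main.v *)
Require Import Defs.
From HB Require Import structures.
From mathcomp Require Import all_boot all_order all_algebra.
From mathcomp Require Import reals.
From mathcomp Require Import ring lra zify.
Import Order.TTheory GRing.Theory Num.Theory.
Local Open Scope ring_scope.


Lemma dRZ_le (R : realType) (x y : R) : 0 <= x - y -> dRZ x y <= x - y.
Proof.
move=> h; rewrite /dRZ ge_min; apply/orP; left.
have : 0 <= (Num.floor (x - y))%:~R :> R by rewrite ler0z floor_ge0.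
lra.
Qed.

Lemma int_far (R : realType) (z : R) (N : int) :
  `|z| <= 1 -> Num.min `|z| (1 - `|z|) <= `|z - N%:~R|.
Proof.
move=> hz; rewrite ge_min; apply/orP.
have [->|hN] := eqVneq N 0; first by left; rewrite subr0.
right.
move: hz; rewrite ler_norml => /andP[hz1 hz2].
have [h1|h1] : (N <= -1 \/ 1 <= N)%R by lia.
- have hN' : N%:~R <= -1 :> R by rewrite -(ler_int R) (_ : (-1)%:~R = -1) // in h1.
  move: hN'; set a := N%:~R => hN'.
  have [zp|zn] := lerP 0 z.
  + rewrite (ger0_norm zp) ger0_norm; lra.
  + rewrite (ltr0_norm zn) ger0_norm; lra.
- have hN' : 1 <= N%:~R :> R by rewrite -(ler_int R) in h1.
  move: hN'; set a := N%:~R => hN'.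
  have [zp|zn] := lerP 0 z.
  + rewrite (ger0_norm zp) ler0_norm; lra.
  + rewrite (ltr0_norm zn) ler0_norm; lra.
Qed.

Lemma dRZ_ge (R : realType) (x y : R) :
  `|x - y| <= 1 -> Num.min `|x - y| (1 - `|x - y|) <= dRZ x y.
Proof.
move=> h; rewrite /dRZ /=.
set z := x - y. set k := Num.floor z.
have h1 : (k%:~R :> R) <= z by apply: floor_le.
have h2 : z < (k + 1)%:~R :> R by apply: floorD1_gt.
rewrite intrD (_ : (1%:~R : R) = 1) // in h2.
rewrite le_min; apply/andP; split.
- have := @int_far R z k h. rewrite (@ger0_norm _ (z - k%:~R)); lra.
- have := @int_far R z (k + 1) h. rewrite intrD (_ : (1%:~R : R) = 1) // (@ler0_norm _ (z - (k%:~R + 1))); lra.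
Qed.


Lemma f_shift_nat (R : realType) (n : nat) (f : R -> 'rV[R]_n)
  (hf : forall x : R, f (x + 1) = f x) (x : R) (k : nat) : f (x + k%:R) = f x.
Proof.
elim: k => [|k IH]; first by rewrite addr0.
by rewrite mulrSr addrA hf IH.
Qed.

Lemma f_shift (R : realType) (n : nat) (f : R -> 'rV[R]_n)
  (hf : forall x : R, f (x + 1) = f x) (x : R) (q : int) : f (x + q%:~R) = f x.
Proof.
case: q => k; first by rewrite -pmulrn f_shift_nat.
rewrite NegzE intrN -pmulrn.
by rewrite -{2}(subrK (k.+1%:R) x) f_shift_nat.
Qed.

Lemma th_shift_nat (R : realType) (th : int -> R) (m : int)
  (h : forall k, th (k + m) = th k + 1) (k : int) (q : nat) :
  th (k + q%:Z * m) = th k + q%:R.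
Proof.
elim: q => [|q IH]; first by rewrite mul0r addr0 addr0.
have -> : k + q.+1%:Z * m = (k + q%:Z * m) + m.
  by rewrite -addn1 PoszD mulrDl mul1r addrA.
by rewrite h IH -addn1 natrD addrA.
Qed.

Lemma th_shift (R : realType) (th : int -> R) (m : int)
  (h : forall k, th (k + m) = th k + 1) (k : int) (q : int) :
  th (k + q * m) = th k + q%:~R.
Proof.
case: q => q; first by rewrite th_shift_nat.
rewrite NegzE intrN -pmulrn.
have := @th_shift_nat R th m h (k + - (q.+1)%:Z * m) q.+1.
rewrite -addrA mulNr addNr addr0 => ->.
by rewrite addrK.
Qed.

Lemma enormN (R : realType) (n : nat) (v : 'rV[R]_n) : enorm (- v) = enorm v.
Proof.
by rewrite /enorm; congr Num.sqrt; apply: eq_bigr => k _; rewrite mxE sqrrN.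
Qed.

Lemma enorm_ge0 (R : realType) (n : nat) (v : 'rV[R]_n) : 0 <= enorm v.
Proof. exact: sqrtr_ge0. Qed.

Lemma enorm_sq (R : realType) (n : nat) (v : 'rV[R]_n) :
  enorm v ^+ 2 = \sum_(k < n) v 0 k ^+ 2.
Proof.
rewrite /enorm sqr_sqrtr //; apply: sumr_ge0 => k _; exact: sqr_ge0.
Qed.

Lemma quad (R : realType) (n : nat) (p p' q q' : 'rV[R]_n) :
  enorm (q - p) ^+ 2 + enorm (q' - p') ^+ 2 <=
  enorm (q - p') ^+ 2 + enorm (q' - p) ^+ 2 + enorm (p' - p) ^+ 2
  + enorm (q' - q) ^+ 2.
Proof.
rewrite -subr_ge0 !enorm_sq -!big_split -sumrB /=.
apply: sumr_ge0 => k _; rewrite !mxE.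
set a := p 0 k; set b := p' 0 k; set c := q 0 k; set d := q' 0 k.
have -> : (c - b) ^+ 2 + (d - a) ^+ 2 + (b - a) ^+ 2 + (d - c) ^+ 2 -
  ((c - a) ^+ 2 + (d - b) ^+ 2) = (b - a + (d - c)) ^+ 2 by ring.
exact: sqr_ge0.
Qed.


Lemma crux (R : realType) (X Y P Q E s D : R) :
  0 <= E -> 1 <= D -> (D - 1) * E <= X -> (D - 1) * E <= Y ->
  D * E <= P -> D * E <= Q ->
  P ^+ 2 + Q ^+ 2 <= X ^+ 2 + Y ^+ 2 + s ^+ 2 + s ^+ 2 ->
  2 * s ^+ 2 <= (2 * D - 1) * E ^+ 2 ->
  (2 * D - 1) * E <= X + Y.
Proof.
move=> hE hD hX hY hP hQ hq hs.
rewrite leNgt; apply/negP => hlt.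
set A := (D - 1) * E.
have hA : 0 <= A by rewrite /A; apply: mulr_ge0; lra.
have h1 : 0 <= (X - A) * (Y - A) by apply: mulr_ge0; rewrite /A; lra.
have hDE : 0 <= D * E by apply: mulr_ge0; lra.
have hP2 : (D * E) ^+ 2 <= P ^+ 2 by nra.
have hQ2 : (D * E) ^+ 2 <= Q ^+ 2 by nra.
have h2 : X ^+ 2 + Y ^+ 2 <= (X + Y - A) ^+ 2 + A ^+ 2.
  have -> : (X + Y - A) ^+ 2 + A ^+ 2 = X ^+ 2 + Y ^+ 2 + 2 * ((X - A) * (Y - A)) by ring.
  lra.
have h3 : (X + Y - A) ^+ 2 < (A + E) ^+ 2.
  rewrite /A in hA hlt *; nra.
have : 2 * (D * E) ^+ 2 - 2 * s ^+ 2 < (A + E) ^+ 2 + A ^+ 2 by lra.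
have -> : (A + E) ^+ 2 + A ^+ 2 = (D * E) ^+ 2 + ((D - 1) * E) ^+ 2 by rewrite /A; ring.
have -> : 2 * (D * E) ^+ 2 - 2 * s ^+ 2 = (D * E) ^+ 2 + ((D - 1) * E) ^+ 2 + ((2 * D - 1) * E ^+ 2 - 2 * s ^+ 2) by ring.
lra.
Qed.

Theorem mainTheorem5 (R : realType) (n : nat) (f : R -> 'rV[R]_n)
  (L1 L2 : R) (theta : nat -> int -> R) :
  (forall x : R, f (x + 1) = f x) ->
  0 < L1 -> L1 <= L2 ->
  (forall x y : R, L1 * dRZ x y <= enorm (f x - f y) /\
                   enorm (f x - f y) <= L2 * dRZ x y) ->
  (forall m : nat, (0 < m)%N ->
     [/\ 0 <= theta m 1,
         (forall k : int, 1 <= k -> k < m%:Z -> theta m k < theta m (k + 1)),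
         theta m m%:Z < 1,
         (forall k : int, theta m (k + m%:Z) = theta m k + 1) &
         (forall k : int, 1 <= k -> k <= m%:Z ->
            normDelta f (theta m) k (k + 1) = polyLength f (theta m) m / m%:R)]) ->
  exists M : nat, forall m : nat, (M <= m)%N ->
    forall i j : int, `|i - j| <= (m %/ 2)%N%:Z ->
    let Lm := polyLength f (theta m) m in
    let u := normDelta f (theta m) in
    let u1 := fun a b => u a (b + 1) in
    let d := (`|i - j|)%:~R : R in
    [/\ Ai u i j >= Lm * L1 / L2 * ((d - 1 / 2) / m%:R),
        Ai u1 i j >= Lm * L1 / L2 * ((d - 1 / 2) / m%:R),
        Aij u i j >= Lm * L1 / L2 * ((d - 1 / 4) / m%:R) &
        Aij u1 i j >= Lm * L1 / (2 * L2) * (d / m%:R)].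
Proof.
move=> hf hL1 hL12 hlip hth.
have hL2 : 0 < L2 by apply: lt_le_trans hL12.
set x0 := 2 * (L2 / L1) ^+ 2.
exists (maxn 4 (Num.trunc x0).+3).
move=> m hMm i j hij Lm u u1 d.
have hm4 : (4 <= m)%N by apply: leq_trans hMm; apply: leq_maxl.
have hmT : ((Num.trunc x0).+3 <= m)%N by apply: leq_trans hMm; apply: leq_maxr.
have hx0 : x0 < (Num.trunc x0).+1%:R := truncnS_gt x0.
have hm0 : (0 < m)%N by clear -hm4; lia.
have [h0 hinc hlt hper hside] := hth m hm0.
have hmR : 0 < m%:R :> R by rewrite ltr0n.
set th := theta m in h0 hinc hlt hper hside Lm u u1 *.
set sg := Lm / m%:R.
have hred : forall k : int, exists r q : int, [/\ 1 <= r, r <= m%:Z & k = r + q * m%:Z].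
  move=> k.
  have hm' : m%:Z != 0 by clear -hm4; lia.
  have hmp : 0 < m%:Z by clear -hm4; lia.
  have e := divz_eq (k - 1) m%:Z.
  have e1 := modz_ge0 (k - 1) hm'.
  have e2 := ltz_pmod (k - 1) hmp.
  move: e e1 e2; set q := ((k - 1) %/ m%:Z)%Z; set r := ((k - 1) %% m%:Z)%Z => e e1 e2.
  exists (r + 1), q; clear -e e1 e2; split; lia.
have hgap : forall k : int, 0 < th (k + 1) - th k /\ u k (k + 1) = sg.
  move=> k; have [r [q [hr1 hrm ->]]] := hred k.
  have e1 : th (r + q * m%:Z) = th r + q%:~R by apply: th_shift.
  have e2 : th (r + q * m%:Z + 1) = th (r + 1) + q%:~R.
    by rewrite addrAC; apply: th_shift.
  split.
  - rewrite e2 e1.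
    have [hrm'|hrm'] := ltP r m%:Z.
    + have := hinc r hr1 hrm'; lra.
    + have -> : r = m%:Z by apply/eqP; rewrite eq_le hrm hrm'.
      have : th (1 + m%:Z) = th 1 + 1 by apply: hper.
      rewrite addrC => ->; lra.
  - rewrite /u /normDelta e1 e2 !f_shift //.
    exact: hside.
have hsg0 : 0 <= sg by have [_ <-] := hgap 0; exact: enorm_ge0.
have hstep : forall k : int, sg <= L2 * (th (k + 1) - th k).
  move=> k; have [hp hu] := hgap k; rewrite -hu.
  have [_ h2] := hlip (th (k + 1)) (th k).
  apply: le_trans h2 _; apply: ler_wpM2l; first lra.
  apply: dRZ_le; lra.
have hsum : forall (a : int) (k : nat), k%:R * sg <= L2 * (th (a + k%:Z) - th a).
  move=> a; elim=> [|k IH]; first by rewrite addr0 subrr mulr0 mul0r.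
  have := hstep (a + k%:Z).
  rewrite (_ : a + k%:Z + 1 = a + k.+1%:Z); last by clear; lia.
  rewrite -[k.+1]addn1 natrD; lra.
have hcore : forall (a : int) (k : nat) (c : R), (k <= m)%N -> c <= k%:R ->
    c <= m%:R - k%:R -> L1 * sg * c <= L2 * u a (a + k%:Z).
  move=> a k c hkm hc1 hc2.
  set t := th (a + k%:Z) - th a.
  have h1 := hsum a k.
  have h2 := hsum (a + k%:Z) (m - k)%N.
  rewrite (_ : a + k%:Z + (m - k)%N%:Z = a + m%:Z) in h2; last by clear -hkm; lia.
  rewrite hper natrB // in h2.
  have hk0 : 0 <= k%:R :> R by rewrite ler0n.
  have hmk : 0 <= m%:R - k%:R :> R by rewrite subr_ge0 ler_nat.
  have ht0 : 0 <= t by rewrite /t; nra.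
  have ht1 : t <= 1 by rewrite /t; nra.
  have [hd _] := hlip (th (a + k%:Z)) (th a).
  have hmin := @dRZ_ge R (th (a + k%:Z)) (th a).
  rewrite -/t ger0_norm // in hmin.
  have {}hmin := hmin ht1.
  have hmn : c * sg <= L2 * Num.min t (1 - t).
    have [htt|htt] := leP t (1 - t).
    + rewrite /t in h1 *; nra.
    + rewrite /t in h2 *; nra.
  have hdu : L1 * dRZ (th (a + k%:Z)) (th a) <= u a (a + k%:Z) by exact: hd.
  have e1 : L1 * (c * sg) <= L1 * (L2 * Num.min t (1 - t)) by apply: ler_wpM2l; lra.
  have e2 : L1 * L2 * Num.min t (1 - t) <= L1 * L2 * dRZ (th (a + k%:Z)) (th a).
    apply: ler_wpM2l => //; apply: mulr_ge0; lra.
  have e3 : L2 * (L1 * dRZ (th (a + k%:Z)) (th a)) <= L2 * u a (a + k%:Z).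
    apply: ler_wpM2l => //; lra.
  have -> : L1 * sg * c = L1 * (c * sg) by ring.
  lra.
set E := L1 * sg / L2.
have hE0 : 0 <= E by rewrite /E; apply: divr_ge0; [apply: mulr_ge0|]; lra.
have hcoreE : forall (a : int) (k : nat) (c : int), (k <= m)%N -> c <= k%:Z ->
    c <= m%:Z - k%:Z -> E * c%:~R <= u a (a + k%:Z).
  move=> a k c hkm hc1 hc2.
  have hc1' : (c%:~R : R) <= k%:R by rewrite [k%:R]pmulrn ler_int.
  have hc2' : (c%:~R : R) <= m%:R - k%:R.
    by rewrite [k%:R]pmulrn [m%:R]pmulrn -mulrzBr ler_int.
  have := hcore a k c%:~R hkm hc1' hc2'.
  have -> : E * c%:~R = (L1 * sg * c%:~R) / L2 by rewrite /E; ring.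
  by move=> h; rewrite ler_pdivrMr //; lra.
have hLB : forall a b c : int, `|b - a| <= m%:Z ->
    c <= Num.min `|b - a| (m%:Z - `|b - a|) -> E * c%:~R <= u a b.
  move=> a b c hab hc.
  have [hba|hba] := lerP 0 (b - a).
  - have hb : b = a + (`|b - a|%N)%:Z by clear -hba; lia.
    rewrite [in u a b]hb; apply: hcoreE; clear -hab hc hba; lia.
  - have -> : u a b = u b a by rewrite /u /normDelta -enormN opprB.
    have ha : a = b + (`|a - b|%N)%:Z by clear -hba; lia.
    rewrite [in u b a]ha; apply: hcoreE; clear -hab hc hba; lia.
have castle : forall a b : int, a <= b -> (a%:~R : R) <= b%:~R.
  by move=> a b; rewrite ler_int.
have hEm : forall x y : R, x <= y -> E * x <= E * y.
  by move=> x y hxy; apply: ler_wpM2l.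
have hD2 : 2 * `|i - j| <= m%:Z by clear -hij; lia.
have hm4' : 4 <= m%:Z by clear -hm4; lia.
have hRHS : forall t, Lm * L1 / L2 * (t / m%:R) = E * t.
  move=> t; rewrite /E /sg; field.
  by apply/andP; split; rewrite lt0r_neq0.
have hRHS2 : forall t, Lm * L1 / (2 * L2) * (t / m%:R) = E * t / 2.
  move=> t; rewrite /E /sg; field.
  by apply/andP; split; rewrite lt0r_neq0.
have hP : E * d <= u i j.
  by apply: hLB; clear -hD2 hm4'; lia.
have hQ : E * d <= u (i + 1) (j + 1).
  by apply: hLB; clear -hD2 hm4'; lia.
have hX : E * (d - 1) <= u (i + 1) j.
  have := hLB (i + 1) j (`|i - j| - 1) ltac:(clear -hD2 hm4'; lia) ltac:(clear -hD2 hm4'; lia).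
  by rewrite mulrzBr.
have hY : E * (d - 1) <= u i (j + 1).
  have := hLB i (j + 1) (`|i - j| - 1) ltac:(clear -hD2 hm4'; lia) ltac:(clear -hD2 hm4'; lia).
  by rewrite mulrzBr.
split.
- rewrite /Ai hRHS; lra.
- rewrite /Ai /u1 hRHS; lra.
- rewrite /Aij hRHS.
  have [hA|hA] := lerP (2 * `|i - j| + 2) m%:Z.
  + have hX' := hLB (i + 1) j `|j - (i + 1)| ltac:(clear -hD2 hm4'; lia) ltac:(clear -hA hD2 hm4'; lia).
    have hY' := hLB i (j + 1) `|j + 1 - i| ltac:(clear -hD2 hm4'; lia) ltac:(clear -hA hD2 hm4'; lia).
    have hc := hEm _ _ (castle (`|i - j| + `|i - j|) (`|j - (i + 1)| + `|j + 1 - i|) ltac:(clear; lia)).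
    rewrite !intrD in hc.
    rewrite /d; lra.
  + set T := Num.trunc x0 in hx0 hmT.
    have hd1 : 1 <= d.
      have := castle 1 `|i - j| ltac:(clear -hA hm4'; lia); by [].
    have hsgE : sg = E * L2 / L1.
      rewrite /E; field; by apply/andP; split; rewrite lt0r_neq0.
    have hx0d : x0 + 1 <= d + d.
      have := castle (T.+1%:Z + 1) (`|i - j| + `|i - j|) ltac:(clear -hA hmT hD2; lia).
      rewrite !intrD -pmulrn (_ : (1%:~R : R) = 1) //; lra.
    have hs : 2 * sg ^+ 2 <= (2 * d - 1) * E ^+ 2.
      have -> : 2 * sg ^+ 2 = x0 * E ^+ 2.
        rewrite hsgE /x0; field; by rewrite lt0r_neq0.
      apply: ler_wpM2r; [exact: sqr_ge0 | lra].
    have hq : u i j ^+ 2 + u (i + 1) (j + 1) ^+ 2 <=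
        u (i + 1) j ^+ 2 + u i (j + 1) ^+ 2 + sg ^+ 2 + sg ^+ 2.
      rewrite -{1}(proj2 (hgap i)) -(proj2 (hgap j)); exact: quad.
    have hcr : (2 * d - 1) * E <= u (i + 1) j + u i (j + 1).
      apply: (@crux R (u (i + 1) j) (u i (j + 1)) (u i j) (u (i + 1) (j + 1)) E sg d) => //; lra.
    lra.
- rewrite /Aij /u1 hRHS2.
  have h1 := hLB i (j + 1) _ ltac:(clear -hD2 hm4'; lia) (lexx _).
  have h2 := hLB (i + 1) (j + 1) _ ltac:(clear -hD2 hm4'; lia) (lexx _).
  have h3 := hLB i (j + 1 + 1) _ ltac:(clear -hD2 hm4'; lia) (lexx _).
  have h4 := hLB (i + 1) (j + 1 + 1) _ ltac:(clear -hD2 hm4'; lia) (lexx _).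
  move: h1 h2 h3 h4.
  set c1 := Num.min `|j + 1 - i| _.
  set c2 := Num.min `|j + 1 - (i + 1)| _.
  set c3 := Num.min `|j + 1 + 1 - i| _.
  set c4 := Num.min `|j + 1 + 1 - (i + 1)| _.
  move=> h1 h2 h3 h4.
  have hc := hEm _ _ (castle (`|i - j| + `|i - j|) (c1 + c2 + c3 + c4)
    ltac:(rewrite /c1 /c2 /c3 /c4; clear -hD2 hm4'; lia)).
  rewrite !intrD in hc.
  rewrite /d; lra.
Qed.
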